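(* Let $q\in\mathbb{C}\setminus\{0\}$ and assume $q^{2j}\neq1$ for $2\le j\le n$. Then the idempotents $p_{(n)}$ and $p_{(1^n)}$ of the Hecke algebra $H_n\subset G_n[0]$ are minimal idempotents of $G_n[0]$, i.e. $p\,G_n[0]\,p=\mathbb{C}p$ for $p\in\{p_{(n)},p_{(1^n)}\}$.
   Context: For $q\in\mathbb{C}\setminus\{0\}$ the Hecke–Clifford algebra $G_n$ is the complex algebra generated by $t_1,\dots,t_{n-1}$ and $v_1,\dots,v_n$ subject to: braid relations $t_jt_{j+1}t_j=t_{j+1}t_jt_{j+1}$, $t_it_j=t_jt_i$ ($|i-j|\ge2$); $t_j-t_j^{-1}=q-q^{-1}$; $v_jv_k+v_kv_j=2\delta_{jk}$; $t_jv_j=v_{j+1}t_j$, $t_jv_{j+1}=v_jt_j-(q-q^{-1})(v_j-v_{j+1})$, $t_jv_l=v_lt_j$ for $l\neq j,j+1$. $G_n[0]$ is the subalgebra fixed by the automorphism $v_j\mapsto -v_j$, $t_j\mapsto t_j$. $H_n\subset G_n[0]$ is the subalgebra generated by the $t_j$ (the Hecke algebra of type $A_{n-1}$). Under the assumption $q^{2j}\neq 1$ for $2\le j\le n$, $H_n$ has minimal central idempotents $p_{(n)}$ and $p_{(1^n)}$ characterized by $t_jp_{(n)}=qp_{(n)}$ and $t_jp_{(1^n)}=-q^{-1}p_{(1^n)}$ for all $1\le j<n$. *)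

(* Defs.v *)
(* The complex numbers are modelled as R[i] for an
   arbitrary R : realType (any realType is a model of the real numbers). *)
From mathcomp Require Import all_boot all_algebra.
From mathcomp Require Import reals complex.
Set Implicit Arguments.
Unset Strict Implicit.
Unset Printing Implicit Defensive.
Import GRing.Theory.
Local Open Scope ring_scope.

(* Letters of words in the generators of the Hecke-Clifford algebra G_n. *)
Inductive hc_letter := LT of nat | LV of nat.

Section HC.
Variables (K : fieldType) (A : algType K) (n : nat) (t v : nat -> A).

Definition hc_valid (l : hc_letter) : bool :=
  match l with LT j => (1 <= j < n)%N | LV j => (1 <= j <= n)%N end.

Definition hc_isV (l : hc_letter) : bool := if l is LV _ then true else false.

Definition hc_eval_letter (l : hc_letter) : A :=
  match l with LT j => t j | LV j => v j end.

Definition hc_eval (w : seq hc_letter) : A := \prod_(l <- w) hc_eval_letter l.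

Definition in_word_span (P : seq hc_letter -> bool) (x : A) : Prop :=
  exists s : seq (K * seq hc_letter),
    all (fun cw => P cw.2) s /\ x = \sum_(cw <- s) cw.1 *: hc_eval cw.2.

(* G_n[0]: spanned by words with an even number of v's *)
Definition even_word (w : seq hc_letter) : bool :=
  all hc_valid w && ~~ odd (count hc_isV w).
Definition in_Gn0 := in_word_span even_word.

(* H_n: spanned by words in the t_j only *)
Definition hecke_word (w : seq hc_letter) : bool :=
  all hc_valid w && ~~ has hc_isV w.
Definition in_Hn := in_word_span hecke_word.

Definition hc_relations (q : K) : Prop :=
  [/\ (forall j, (1 <= j)%N -> (j.+1 < n)%N ->
         t j * t j.+1 * t j = t j.+1 * t j * t j.+1),
      (forall i j, (1 <= i < n)%N -> (1 <= j < n)%N -> (j.+2 <= i \/ i.+2 <= j)%N ->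
         t i * t j = t j * t i),
      (forall j, (1 <= j < n)%N ->
         exists u : A, [/\ t j * u = 1, u * t j = 1 & t j - u = (q - q^-1) *: 1]),
      (forall j k, (1 <= j <= n)%N -> (1 <= k <= n)%N ->
         v j * v k + v k * v j = (if j == k then 2 else 0) *: 1)
    & (forall j, (1 <= j < n)%N ->
         [/\ t j * v j = v j.+1 * t j,
             t j * v j.+1 = v j * t j - (q - q^-1) *: (v j - v j.+1)
           & forall l, (1 <= l <= n)%N -> l != j -> l != j.+1 ->
               t j * v l = v l * t j])].

Definition minimal_in_Gn0 (p : A) : Prop :=
  forall y : A, (exists x, in_Gn0 x /\ y = p * x * p) <-> (exists c : K, y = c *: p).

End HC.

(* Main.v *)
Require Import Defs.
From mathcomp Require Import all_boot all_algebra.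
From mathcomp Require Import reals complex.
From mathcomp Require Import ring zify.
Set Implicit Arguments.
Unset Strict Implicit.
Unset Printing Implicit Defensive.
Import GRing.Theory Num.Theory.
Local Open Scope ring_scope.


Lemma rel_tsq (K : numFieldType) (A : algType K) n (t v : nat -> A) q :
  hc_relations n t v q -> forall j, (1 <= j < n)%N ->
  t j * t j = (q - q^-1) *: t j + 1.
Proof.
case=> _ _ Hinv _ _ j hj; case: (Hinv j hj) => u [h1 h2 h3].
have hu : u = t j - (q - q^-1) *: 1 by rewrite -h3 opprB addrC subrK.
move: h1; rewrite hu mulrBr -scalerAr mulr1 => /eqP.
by rewrite subr_eq addrC => /eqP.
Qed.

Lemma rel_vsq (K : numFieldType) (A : algType K) n (t v : nat -> A) q :
  hc_relations n t v q -> forall j, (1 <= j <= n)%N -> v j * v j = 1.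
Proof.
case=> _ _ _ H4 _ j hj; have := H4 j j hj hj; rewrite eqxx -mulr2n -scaler_nat.
move=> /(congr1 (fun x => 2^-1 *: x)); rewrite !scalerA mulVf ?pnatr_eq0 //.
by rewrite !scale1r.
Qed.

Lemma rel_vanti (K : numFieldType) (A : algType K) n (t v : nat -> A) q :
  hc_relations n t v q -> forall j k, (1 <= j <= n)%N -> (1 <= k <= n)%N ->
  j != k -> v j * v k = - (v k * v j).
Proof.
case=> _ _ _ H4 _ j k hj hk /negPf jk; have := H4 j k hj hk; rewrite jk scale0r.
by move/eqP; rewrite addr_eq0 => /eqP.
Qed.

Lemma rel_tcomm (K : numFieldType) (A : algType K) n (t v : nat -> A) q :
  hc_relations n t v q -> forall i j, (1 <= j)%N -> (j.+2 <= i)%N -> (i < n)%N ->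
  t i * t j = t j * t i.
Proof.
case=> _ H2 _ _ _ i j h1 h2 h3; apply: H2; [ | | by left].
  by rewrite h3 andbT; apply: leq_trans h2; rewrite ltnW // (leq_trans h1).
by rewrite h1 /=; apply: leq_trans h3; apply: leq_trans h2; rewrite ltnW.
Qed.

Fixpoint Xe (K : numFieldType) (A : algType K) (t : nat -> A) (q : K) (m : nat) : A :=
  match m with 0 => 1 | m'.+1 => 1 + q *: (t m'.+1 * Xe t q m') end.

Lemma tX_comm (K : numFieldType) (A : algType K) n (t v : nat -> A) q :
  hc_relations n t v q -> forall j k, (j.+2 <= k)%N -> (k < n)%N ->
  t k * Xe t q j = Xe t q j * t k.
Proof.
move=> H; elim=> [|j IH] k h1 h2 /=; first by rewrite mulr1 mul1r.
rewrite mulrDr mulrDl mulr1 mul1r -scalerAr -scalerAl mulrA.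
by rewrite (rel_tcomm H) // -mulrA (IH _ (ltnW h1) h2) mulrA.
Qed.

Lemma Cm (K : numFieldType) (A : algType K) n (t v : nat -> A) q :
  hc_relations n t v q -> q != 0 -> forall m, (m < n)%N -> forall Z,
  (forall j, (1 <= j < m)%N -> Z * t j = q *: Z) ->
  forall k, (1 <= k <= m)%N -> Z * Xe t q m * t k = q *: (Z * Xe t q m).
Proof.
move=> H q0; elim=> [|m IH] hm Z HZ k hk; first by case/andP: hk => /leq_trans h /h.
case/andP: hk => k1; rewrite leq_eqVlt => /orP [/eqP ->| km]; last first.
  rewrite /= mulrDr mulr1 mulrDl -scalerAr -scalerAl.
  have hk' : (0 < k < m.+1)%N by rewrite k1 km.
  have HZ' : forall j, (0 < j < m)%N -> Z * t m.+1 * t j = q *: (Z * t m.+1).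
    move=> j /andP [j1 jm]; rewrite -mulrA (rel_tcomm H (i:=m.+1) (j:=j) j1 jm hm).
    by rewrite mulrA (HZ j) ?j1 ?(ltn_trans jm) // -scalerAl.
  rewrite (HZ k hk') (mulrA Z) (IH (ltnW hm) _ HZ' k); last by rewrite k1.
  by rewrite scalerDr.
case: m IH hm HZ => [|m] IH hm HZ.
  rewrite /= mulr1 mulrDr mulr1 mulrDl -scalerAr -scalerAl -mulrA (rel_tsq H) //.
  rewrite mulrDr mulr1 -scalerAr !scalerDr !scalerA.
  set a := Z * t 1; set b := Z.
  rewrite addrA -{1}[a]scale1r -scalerDl addrC; congr (_ + _ *: _).
  by field.
set M := m.+2.
have hM1 : (0 < m.+1 < n)%N by rewrite /= (ltn_trans _ hm).
have hMn : (0 < M < n)%N by rewrite /= hm.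
have hX : Xe t q m * t M = t M * Xe t q m := esym (tX_comm H (j:=m) (k:=M) (leqnn _) hm).
have hb : Z * t M * t m.+1 * t M = q *: (Z * t M * t m.+1).
  have [H1 _ _ _ _] := H.
  have hm12 : (0 < m.+1 < m.+2)%N by rewrite ltnSn.
  by rewrite -!mulrA (mulrA (t M)) -H1 // !mulrA (HZ _ hm12) -!scalerAl.
have hs : Z * t M * t M = (q - q^-1) *: (Z * t M) + Z.
  by rewrite -mulrA (rel_tsq H) // mulrDr mulr1 -scalerAr.
rewrite /M /= -/M.
do 3 rewrite ?(mulrDr, mulrDl, mulr1, mul1r, scalerDr) -?scalerAr -?scalerAl ?mulrA.
rewrite hs -(mulrA _ (Xe t q m) (t M)) hX mulrA hb -scalerAl !scalerDr !scalerA.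
set a := Z * t M; set d := Z * t M * t m.+1 * Xe t q m.
rewrite !addrA -{1}[a]scale1r -scalerDl; congr (_ + _); rewrite addrC.
by congr (_ + _ *: _); field.
Qed.

Fixpoint Ee (K : numFieldType) (A : algType K) (t : nat -> A) (q : K) (m : nat) : A :=
  match m with 0 => 1 | m'.+1 => Ee t q m' * Xe t q m' end.

Lemma Ee_inv (K : numFieldType) (A : algType K) n (t v : nat -> A) q :
  hc_relations n t v q -> q != 0 -> forall m, (m <= n)%N ->
  forall j, (1 <= j < m)%N -> Ee t q m * t j = q *: Ee t q m.
Proof.
move=> H q0; elim=> [|m IH] hm j hj; first by rewrite ltn0 andbF in hj.
apply: (Cm H q0 hm) => [i hi|]; first exact: IH (ltnW hm) i hi.
by case/andP: hj => -> /=.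
Qed.

Fixpoint betaq (K : numFieldType) (q : K) (m : nat) : K :=
  match m with 0 => 1 | m'.+1 => 1 + q * q * betaq q m' end.

Fixpoint alphaq (K : numFieldType) (q : K) (m : nat) : K :=
  match m with 0 => 1 | m'.+1 => alphaq q m' * betaq q m' end.

Lemma Xe_p (K : numFieldType) (A : algType K) n (t : nat -> A) q (p : A) :
  (forall j, (1 <= j < n)%N -> t j * p = q *: p) ->
  forall m, (m < n)%N -> Xe t q m * p = betaq q m *: p.
Proof.
move=> Hp; elim=> [|m IH] hm /=; first by rewrite mul1r scale1r.
rewrite mulrDl mul1r -scalerAl -(mulrA (t _)) IH ?(ltnW hm) // -scalerAr Hp // scalerA.
rewrite scalerA -{1}[p]scale1r -scalerDl.
by rewrite mulrAC.
Qed.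

Lemma Ee_p (K : numFieldType) (A : algType K) n (t : nat -> A) q (p : A) :
  (forall j, (1 <= j < n)%N -> t j * p = q *: p) ->
  forall m, (m <= n)%N -> Ee t q m * p = alphaq q m *: p.
Proof.
move=> Hp; elim=> [|m IH] hm /=; first by rewrite mul1r scale1r.
by rewrite -(mulrA (Ee t q m)) (Xe_p Hp hm) -scalerAr (IH (ltnW hm)) scalerA mulrC.
Qed.

Lemma betaq_eq (K : numFieldType) (q : K) m :
  betaq q m * (1 - q * q) = 1 - q ^+ (2 * m.+1).
Proof.
elim: m => [|m IH] /=; first by rewrite mul1r muln1 expr2.
rewrite mulrDl mul1r -mulrA IH.
have -> : (2 * m.+2 = (2 * m.+1).+2)%N by rewrite !mulnS.
by rewrite !exprS; ring.
Qed.

Lemma alphaq_neq0 (K : numFieldType) n (q : K) :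
  (forall j : nat, (2 <= j <= n)%N -> q ^+ (2 * j) != 1) ->
  forall m, (m <= n)%N -> alphaq q m != 0.
Proof.
move=> Hq; elim=> [|m IH] hm /=; first exact: oner_neq0.
rewrite mulf_neq0 ?IH ?(ltnW hm) //.
case: m {IH} hm => [|m] hm /=; first exact: oner_neq0.
apply/eqP => h0; have := betaq_eq q m.+1; rewrite /= h0 mul0r => /eqP.
by rewrite eq_sym subr_eq0 eq_sym (negPf (Hq m.+2 _)).
Qed.

Lemma p_right (K : numFieldType) (A : algType K) n (t v : nat -> A) q (p : A) :
  hc_relations n t v q -> q != 0 ->
  (forall j : nat, (2 <= j <= n)%N -> q ^+ (2 * j) != 1) ->
  in_Hn n t v p -> (forall j, (1 <= j < n)%N -> t j * p = q *: p) ->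
  forall j, (1 <= j < n)%N -> p * t j = q *: p.
Proof.
move=> H q0 Hq [s [Hs Hps]] Hp.
set E := Ee t q n.
have Einv := Ee_inv H q0 (leqnn n).
have Ew : forall w, hecke_word n w -> E * hc_eval t v w = q ^+ size w *: E.
  elim => [|l w IH]; first by rewrite /hc_eval big_nil mulr1 expr0 scale1r.
  rewrite /hecke_word /hc_eval big_cons /=; case: l => j /=; last by rewrite andbF.
  case/andP => /andP [hj hw] hv; rewrite mulrA Einv // -scalerAl IH; last by rewrite /hecke_word hw hv.
  by rewrite scalerA exprS.
have EP := Ee_p Hp (leqnn n).
have EP2 : E * p = (\sum_(cw <- s) cw.1 * q ^+ size cw.2) *: E.
  rewrite {1}Hps mulr_sumr scaler_suml.
  elim: s Hs {Hps} => [|cw s IHs]; first by rewrite !big_nil.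
  by rewrite /= !big_cons => /andP [h1 h2]; rewrite IHs // -scalerAr Ew // scalerA.
have a0 := alphaq_neq0 Hq (leqnn n).
have pE : p = ((alphaq q n)^-1 * \sum_(cw <- s) cw.1 * q ^+ size cw.2) *: E.
  by rewrite -scalerA -EP2 EP scalerA mulVf // scale1r.
move=> j hj; rewrite pE -scalerAl Einv // !scalerA; congr (_ *: _); ring.
Qed.


Definition vw (K : numFieldType) (A : algType K) (v : nat -> A) (u : seq nat) : A :=
  \prod_(a <- u) v a.
Definition vvalid (n : nat) (u : seq nat) : bool := all (fun a => (1 <= a <= n)%N) u.
Definition inKp (K : numFieldType) (A : algType K) (p y : A) : Prop :=
  exists c : K, y = c *: p.
Definition SpanV (K : numFieldType) (A : algType K) n (v : nat -> A) (p : A) k (y : A) :=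
  exists s : seq (K * seq nat),
    all (fun cu => (size cu.2 == k) && vvalid n cu.2) s /\
    y = \sum_(cu <- s) cu.1 *: (vw v cu.2 * p).

Lemma vw_nil (K : numFieldType) (A : algType K) (v : nat -> A) : vw v [::] = 1.
Proof. by rewrite /vw big_nil. Qed.
Lemma vw_cons (K : numFieldType) (A : algType K) (v : nat -> A) a u :
  vw v (a :: u) = v a * vw v u.
Proof. by rewrite /vw big_cons. Qed.
Lemma vw_cat (K : numFieldType) (A : algType K) (v : nat -> A) u1 u2 :
  vw v (u1 ++ u2) = vw v u1 * vw v u2.
Proof. by rewrite /vw big_cat. Qed.

Lemma inKp0 (K : numFieldType) (A : algType K) (p : A) : inKp p 0.
Proof. by exists 0; rewrite scale0r. Qed.
Lemma inKpD (K : numFieldType) (A : algType K) (p x y : A) :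
  inKp p x -> inKp p y -> inKp p (x + y).
Proof. by move=> [a ->] [b ->]; exists (a + b); rewrite scalerDl. Qed.
Lemma inKpZ (K : numFieldType) (A : algType K) (p x : A) c :
  inKp p x -> inKp p (c *: x).
Proof. by move=> [a ->]; exists (c * a); rewrite scalerA. Qed.
Lemma inKpN (K : numFieldType) (A : algType K) (p x : A) :
  inKp p x -> inKp p (- x).
Proof. by move=> h; rewrite -scaleN1r; apply: inKpZ. Qed.
Lemma inKpB (K : numFieldType) (A : algType K) (p x y : A) :
  inKp p x -> inKp p y -> inKp p (x - y).
Proof. by move=> hx hy; apply: inKpD => //; apply: inKpN. Qed.

Lemma SpanV0 (K : numFieldType) (A : algType K) n (v : nat -> A) p k : SpanV n v p k 0.
Proof. by exists [::]; rewrite big_nil. Qed.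
Lemma SpanVD (K : numFieldType) (A : algType K) n (v : nat -> A) p k x y :
  SpanV n v p k x -> SpanV n v p k y -> SpanV n v p k (x + y).
Proof.
move=> [s1 [h1 ->]] [s2 [h2 ->]]; exists (s1 ++ s2).
by rewrite all_cat h1 h2 big_cat.
Qed.
Lemma SpanVZ (K : numFieldType) (A : algType K) n (v : nat -> A) p k c x :
  SpanV n v p k x -> SpanV n v p k (c *: x).
Proof.
move=> [s [h ->]]; exists [seq (c * cu.1, cu.2) | cu <- s]; split.
  by rewrite all_map; apply: sub_all h => cu.
by rewrite big_map scaler_sumr; apply: eq_bigr => cu _; rewrite scalerA.
Qed.
Lemma SpanV1 (K : numFieldType) (A : algType K) n (v : nat -> A) p u :
  vvalid n u -> SpanV n v p (size u) (vw v u * p).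
Proof.
by move=> hu; exists [:: (1, u)]; rewrite /= eqxx hu big_cons big_nil scale1r addr0.
Qed.
Lemma SpanVl (K : numFieldType) (A : algType K) n (v : nat -> A) p k a y :
  (1 <= a <= n)%N -> SpanV n v p k y -> SpanV n v p k.+1 (v a * y).
Proof.
move=> ha [s [h ->]]; exists [seq (cu.1, a :: cu.2) | cu <- s]; split.
  rewrite all_map; apply: sub_all h => cu /= /andP [/eqP -> ->].
  by rewrite eqxx ha.
rewrite big_map mulr_sumr; apply: eq_bigr => cu _.
by rewrite -scalerAr vw_cons mulrA.
Qed.

Lemma SpanVB (K : numFieldType) (A : algType K) n (v : nat -> A) p k x y :
  SpanV n v p k x -> SpanV n v p k y -> SpanV n v p k (x - y).
Proof. by move=> hx hy; apply: SpanVD => //; rewrite -scaleN1r; apply: SpanVZ. Qed.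

Lemma SpanV_tv (K : numFieldType) (A : algType K) n (t v : nat -> A) q (p : A) :
  hc_relations n t v q -> (forall j, (1 <= j < n)%N -> t j * p = q *: p) ->
  forall j, (1 <= j < n)%N -> forall u, vvalid n u ->
  SpanV n v p (size u) (t j * vw v u * p).
Proof.
move=> H Hp j hj; have [_ _ _ _ H5] := H; have [E1 E2 E3] := H5 j hj.
have hj1 : (1 <= j.+1 <= n)%N by case/andP: hj.
have hj0 : (1 <= j <= n)%N by case/andP: hj => -> /ltnW.
elim=> [|a u IH] /=.
  move=> _; have := SpanVZ q (SpanV1 v p (isT : vvalid n [::])).
  by rewrite vw_nil !mulr1 Hp // mul1r.
case/andP=> ha hu; rewrite vw_cons mulrA.
case: (eqVneq a j) => [->|aj].
  by rewrite E1 -!mulrA; apply: SpanVl => //; rewrite mulrA; apply: IH.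
case: (eqVneq a j.+1) => [->|aj1].
  rewrite E2 !mulrBl -!scalerAl !mulrBl; apply: SpanVB.
    by rewrite -!mulrA; apply: SpanVl => //; rewrite mulrA; apply: IH.
  apply: SpanVZ; apply: SpanVB.
    by have := @SpanV1 _ _ n v p (j :: u); rewrite vw_cons; apply; apply/andP.
  by have := @SpanV1 _ _ n v p (j.+1 :: u); rewrite vw_cons; apply; apply/andP.
by rewrite E3 // -!mulrA; apply: SpanVl => //; rewrite mulrA; apply: IH.
Qed.

Lemma SpanV_t (K : numFieldType) (A : algType K) n (t v : nat -> A) q (p : A) k y :
  hc_relations n t v q -> (forall j, (1 <= j < n)%N -> t j * p = q *: p) ->
  forall j, (1 <= j < n)%N -> SpanV n v p k y -> SpanV n v p k (t j * y).
Proof.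
move=> H Hp j hj [s [hs ->]]; elim: s hs => [|cu s IHs] /=.
  by rewrite big_nil mulr0 => _; apply: SpanV0.
case/andP => /andP [/eqP hk hv] hs; rewrite big_cons mulrDr; apply: SpanVD; last exact: IHs.
by rewrite -scalerAr; apply: SpanVZ; rewrite mulrA -hk; exact: (SpanV_tv H Hp hj hv).
Qed.

Lemma SpanV_word (K : numFieldType) (A : algType K) n (t v : nat -> A) q (p : A) :
  hc_relations n t v q -> (forall j, (1 <= j < n)%N -> t j * p = q *: p) ->
  forall w, all (hc_valid n) w -> SpanV n v p (count hc_isV w) (hc_eval t v w * p).
Proof.
move=> H Hp; elim=> [|l w IH] /=.
  by move=> _; have := SpanV1 v p (isT : vvalid n [::]); rewrite vw_nil /hc_eval big_nil.
case/andP => hl hw; rewrite /hc_eval big_cons -/(hc_eval t v w) -mulrA.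
case: l hl => a /= ha; first by rewrite add0n; apply: (SpanV_t H Hp ha); apply: IH.
by rewrite add1n; apply: SpanVl => //; apply: IH.
Qed.

Lemma vv_sub n u u' : {subset u' <= u} -> vvalid n u -> vvalid n u'.
Proof. by move=> sub /allP h; apply/allP => x /sub; exact: h. Qed.

Ltac subtac := let x := fresh "x" in move=> x; rewrite !(mem_cat, inE);
  repeat (case/orP; [move=> ->; rewrite ?orbT // | ]); move=> ->; rewrite ?orbT.

Lemma vv_rel (K : numFieldType) (A : algType K) n (t v : nat -> A) q a b :
  hc_relations n t v q -> (1 <= a <= n)%N -> (1 <= b <= n)%N ->
  v a * v b = (if a == b then 2 else 0) *: 1 - v b * v a.
Proof. by case=> _ _ _ H4 _ ha hb; rewrite -(H4 a b ha hb) addrK. Qed.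

Lemma g_swap (K : numFieldType) (A : algType K) n (t v : nat -> A) q (p : A) Al X a b :
  hc_relations n t v q -> (1 <= a <= n)%N -> (1 <= b <= n)%N ->
  p * vw v (Al ++ a :: b :: X) * p =
  (if a == b then 2 else 0) *: (p * vw v (Al ++ X) * p) - p * vw v (Al ++ b :: a :: X) * p.
Proof.
move=> H ha hb; rewrite !vw_cat !vw_cons !mulrA -(mulrA (p * vw v Al) (v a)).
rewrite (vv_rel H ha hb) mulrBr mulrBl mulrBl -scalerAr mulr1 -!scalerAl !mulrA.
by [].
Qed.

Lemma bubble (K : numFieldType) (A : algType K) n (t v : nat -> A) q (p : A) m :
  hc_relations n t v q ->
  (forall u, size u = (2 * m)%N -> vvalid n u -> inKp p (p * vw v u * p)) ->
  forall B Al R a, size (Al ++ a :: B ++ R) = (2 * m).+2 ->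
  vvalid n (Al ++ a :: B ++ R) ->
  inKp p (p * vw v (Al ++ a :: B ++ R) * p
          - (-1) ^+ size B *: (p * vw v (Al ++ B ++ a :: R) * p)).
Proof.
move=> H IHm; elim=> [|b B IHB] Al R a hs hv /=.
  by rewrite expr0 scale1r subrr; apply: inKp0.
have ha : (1 <= a <= n)%N by apply: (allP hv); rewrite !(mem_cat, inE, eqxx, orbT).
have hb : (1 <= b <= n)%N by apply: (allP hv); rewrite !(mem_cat, inE, eqxx, orbT).
have := IHB (rcons Al b) R a; rewrite !cat_rcons => /(_ _ _).
case; [by move: hs; rewrite !(size_cat, size_rcons) /= ?size_cat; lia
      | by apply: (vv_sub _ hv); subtac | ] => c hc.
rewrite (g_swap _ _ _ H ha hb) exprS mulN1r scaleNr opprK.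
have hX : inKp p (p * vw v (Al ++ B ++ R) * p).
  apply: IHm; last by apply: (vv_sub _ hv); subtac.
  by move: hs; rewrite !size_cat /= ?size_cat; lia.
have -> : forall (x y z : A), x - y + z = x - (y - z).
  by move=> x y z; rewrite opprB addrA addrAC.
apply: inKpB; first exact: inKpZ.
by exists c; rewrite -hc.
Qed.

Lemma sign_sq (K : numFieldType) k : ((-1) ^+ k : K) * (-1) ^+ k = 1.
Proof. by elim: k => [|k IH]; rewrite ?expr0 ?mulr1 // exprS mulN1r mulrNN. Qed.

Lemma inKp_tr (K : numFieldType) (A : algType K) (p y y' : A) k :
  inKp p (y - (-1) ^+ k *: y') -> inKp p y' -> inKp p y.
Proof.
move=> h1 h2; have -> : y = (y - (-1) ^+ k *: y') + (-1) ^+ k *: y' by rewrite subrK.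
by apply: inKpD => //; apply: inKpZ.
Qed.

Lemma inKp_tr' (K : numFieldType) (A : algType K) (p y y' : A) k :
  inKp p (y - (-1) ^+ k *: y') -> inKp p y -> inKp p y'.
Proof.
move=> h1 h2.
have -> : y' = (-1) ^+ k *: (y - (y - (-1) ^+ k *: y')).
  by rewrite opprB addrC subrK scalerA sign_sq scale1r.
by apply: inKpZ; apply: inKpB.
Qed.

Definition shf (a x : nat) : nat := if x == a then a.+1 else x.

Lemma shift_comm (K : numFieldType) (A : algType K) n (t v : nat -> A) q a :
  hc_relations n t v q -> (1 <= a < n)%N -> forall u, vvalid n u -> a.+1 \notin u ->
  t a * vw v u = vw v (map (shf a) u) * t a.
Proof.
move=> H ha; have [_ _ _ _ H5] := H; have [E1 E2 E3] := H5 a ha.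
elim=> [|x u IH] /=; first by rewrite !vw_nil mulr1 mul1r.
case/andP=> hx hu; rewrite in_cons negb_or => /andP [hx1 hu1].
rewrite !vw_cons mulrA /shf; case: (eqVneq x a) => [->|xa].
  by rewrite E1 -!mulrA IH.
by rewrite E3 // 1?eq_sym // -!mulrA IH.
Qed.

Lemma g_shift (K : numFieldType) (A : algType K) n (t v : nat -> A) q (p : A) a u :
  hc_relations n t v q -> q != 0 ->
  (forall j, (1 <= j < n)%N -> t j * p = q *: p) ->
  (forall j, (1 <= j < n)%N -> p * t j = q *: p) ->
  (1 <= a < n)%N -> vvalid n u -> a.+1 \notin u ->
  p * vw v u * p = p * vw v (map (shf a) u) * p.
Proof.
move=> H q0 Hp Hpr ha hu hau.
have e : q *: (p * vw v u * p) = q *: (p * vw v (map (shf a) u) * p).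
  have L : p * (t a * vw v u) * p = q *: (p * vw v u * p).
    by rewrite mulrA Hpr // -!scalerAl.
  have R : p * (vw v (map (shf a) u) * t a) * p = q *: (p * vw v (map (shf a) u) * p).
    by rewrite !mulrA -(mulrA _ (t a)) Hp // -scalerAr.
  by rewrite -L -R (shift_comm H ha hu hau).
by move: e => /(congr1 (fun x => q^-1 *: x)); rewrite !scalerA mulVf // !scale1r.
Qed.

Lemma g_adj (K : numFieldType) (A : algType K) n (t v : nat -> A) q (p : A) a Z :
  hc_relations n t v q -> q != 0 -> q + q^-1 != 0 ->
  (forall j, (1 <= j < n)%N -> t j * p = q *: p) ->
  (forall j, (1 <= j < n)%N -> p * t j = q *: p) ->
  (1 <= a < n)%N -> vvalid n Z -> a \notin Z -> a.+1 \notin Z ->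
  inKp p (p * vw v Z * p) -> inKp p (p * vw v (a :: a.+1 :: Z) * p).
Proof.
move=> H q0 qq Hp Hpr ha hZ haZ ha1Z [k hk].
have [_ _ _ _ H5] := H; have [E1 E2 E3] := H5 a ha.
have ha0 : (1 <= a <= n)%N by case/andP: ha => -> /ltnW.
have ha1 : (1 <= a.+1 <= n)%N by case/andP: ha.
set W := vw v Z; set c := q - q^-1.
have comm : t a * W = W * t a.
  rewrite /W (shift_comm H ha hZ ha1Z) map_id_in // => x hx.
  by rewrite /shf; case: eqP => // xa; rewrite -xa hx in haZ.
set G := p * vw v (a :: a.+1 :: Z) * p.
have e1 : p * (t a * (v a * (v a.+1 * W))) * p = q *: G.
  by rewrite mulrA Hpr // -!scalerAl /G !vw_cons.
have e2 : t a * (v a * (v a.+1 * W)) =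
    (v a.+1 * v a * W) * t a - c *: (v a.+1 * v a * W) + c *: W.
  rewrite mulrA E1 -(mulrA (v a.+1) (t a)) (mulrA (t a)) E2 mulrBl mulrBr.
  rewrite -(mulrA (v a) (t a)) comm -scalerAl -scalerAr mulrBl mulrBr !mulrA.
  rewrite (rel_vsq H ha1) mul1r.
  by rewrite scalerBr opprB addrA addrAC.
have e3 : v a.+1 * v a * W = - (v a * (v a.+1 * W)).
  by rewrite (rel_vanti H ha1 ha0) ?mulNr ?mulrA //; rewrite eq_sym neq_ltn ltnSn.
have e4 : q *: G = - (q *: G) + c *: G + c *: (k *: p).
  have hG : G = p * (v a * (v a.+1 * W)) * p by rewrite /G !vw_cons.
  rewrite -{1}e1 e2 e3 -hk hG.
  rewrite mulrDr mulrBr mulrDl mulrBl mulNr mulrN mulNr -!scalerAr -!scalerAl.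
  rewrite mulrN mulNr scalerN opprK (mulrA p _ (t a)) -(mulrA _ (t a) p) Hp //.
  by rewrite -scalerAr.
exists ((q + q^-1)^-1 * c * k).
have e5 : (q + q^-1) *: G = (c * k) *: p.
  have -> : q + q^-1 = q + q - c by rewrite /c; ring.
  rewrite scalerBl scalerDl {1}e4 -scalerA.
  by rewrite addrAC (addrAC (- _)) addrK addrAC addNr add0r.
by rewrite -mulrA -scalerA -e5 scalerA mulVf // scale1r.
Qed.

Lemma uniq_mid (T : eqType) (X Y : seq T) a :
  uniq (X ++ a :: Y) -> (a \notin X ++ Y) && uniq (X ++ Y).
Proof.
rewrite uniq_catC /= => /andP [h1 h2].
by rewrite mem_cat orbC -mem_cat h1 /= uniq_catC.
Qed.

Lemma g_gap (K : numFieldType) (A : algType K) n (t v : nat -> A) q (p : A) m :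
  hc_relations n t v q -> q != 0 -> ((2 <= n)%N -> q + q^-1 != 0) ->
  (forall j, (1 <= j < n)%N -> t j * p = q *: p) ->
  (forall j, (1 <= j < n)%N -> p * t j = q *: p) ->
  (forall u, size u = (2 * m)%N -> vvalid n u -> inKp p (p * vw v u * p)) ->
  forall d u a b, size u = (2 * m).+2 -> vvalid n u -> uniq u ->
  a \in u -> b \in u -> b = (a + d.+1)%N -> inKp p (p * vw v u * p).
Proof.
move=> H q0 qq Hp Hpr IHm.
have Bub := bubble H IHm.
elim/ltn_ind => d IHd u a b hs hv hu ha hb hab.
have va : (1 <= a <= n)%N by apply: (allP hv).
have vb : (1 <= b <= n)%N by apply: (allP hv).
case: (boolP (has (fun x => a < x < b)%N u)) => [/hasP [x hx /andP [ax xb]] | hno].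
  apply: (IHd (x - a).-1 _ u a x) => //; clear -ax xb hab; lia.
case: d IHd hab => [|d] IHd hab.
  have han : (1 <= a < n)%N by clear -va vb hab; move: va vb; rewrite hab; lia.
  move: hs hv hu hb; case/splitPr: ha => X Y hs hv hu hb.
  have := Bub X [::] Y a; rewrite /= => /(_ _ _) h.
  apply: (inKp_tr' (h _ _)).
  - by clear -hs; move: hs; rewrite !size_cat /=; lia.
  - by rewrite va; apply: (vv_sub _ hv); subtac.
  have /andP [haXY huXY] := uniq_mid hu.
  have hbXY : b \in X ++ Y.
    have hba : b != a by rewrite hab addn1 neq_ltn ltnSn orbT.
    by move: hb; rewrite !mem_cat in_cons (negPf hba).
  have hs' : size (X ++ Y) = (2 * m).+1 by clear -hs; move: hs; rewrite !size_cat /=; lia.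
  have hv' : vvalid n (X ++ Y) by apply: (vv_sub _ hv); subtac.
  move: hbXY huXY haXY hs' hv'; rewrite hab addn1.
  case/splitPr => X' Y' huXY haXY hs' hv'.
  have /andP [hbZ huZ] := uniq_mid huXY.
  have := Bub X' [:: a] Y' a.+1; rewrite /= => /(_ _ _) h2.
  apply: (inKp_tr' (h2 _ _)).
  - by clear -hs'; move: hs'; rewrite !size_cat /=; lia.
  - by rewrite va (andP han).2 /=; apply: (vv_sub _ hv'); subtac.
  apply: (g_adj H q0 _ Hp Hpr han).
  - by apply: qq; case/andP: han => hh1 hh2; apply: leq_ltn_trans hh2.
  - by apply: (vv_sub _ hv'); subtac.
  - by apply: contra haXY; rewrite !(mem_cat, inE) => /orP [->|->]; rewrite ?orbT.
  - by [].
  - apply: IHm; first by clear -hs'; move: hs'; rewrite !size_cat /=; lia.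
    by apply: (vv_sub _ hv'); subtac.
have ha1 : a.+1 \notin u.
  apply/negP => h; move/negP: hno; apply; apply/hasP; exists a.+1 => //.
  by rewrite ltnSn /= hab; clear; lia.
have han : (1 <= a < n)%N by clear -va vb hab; move: va vb; rewrite hab; lia.
have hba : b != a by rewrite hab; clear; lia.
rewrite (g_shift H q0 Hp Hpr han hv ha1).
apply: (IHd d (ltnSn d) _ a.+1 b).
- by rewrite size_map.
- rewrite /vvalid all_map; apply/allP => x hx /=; rewrite /shf.
  case: eqP => _; last exact: (allP hv).
  by clear -han; move: han; lia.
- rewrite map_inj_in_uniq // => x y hx hy; rewrite /shf.
  case: eqP => [->|xa]; case: eqP => [->|ya] // => e.
    by rewrite e hy in ha1.
  by rewrite -e hx in ha1.
- by apply/mapP; exists a => //; rewrite /shf eqxx.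
- by apply/mapP; exists b => //; rewrite /shf (negPf hba).
- by rewrite hab; clear; lia.
Qed.

Lemma nonuniq_split (T : eqType) (u : seq T) :
  ~~ uniq u -> exists X a Y Z, u = X ++ a :: Y ++ a :: Z.
Proof.
elim: u => [|b u IH] //=; rewrite negb_and negbK => /orP [hb|hu].
  by case/splitPr: hb => p1 p2; exists [::], b, p1, p2.
by have [X [a [Y [Z ->]]]] := IH hu; exists (b :: X), a, Y, Z.
Qed.

Lemma g_main (K : numFieldType) (A : algType K) n (t v : nat -> A) q (p : A) :
  hc_relations n t v q -> q != 0 -> ((2 <= n)%N -> q + q^-1 != 0) ->
  (forall j, (1 <= j < n)%N -> t j * p = q *: p) ->
  (forall j, (1 <= j < n)%N -> p * t j = q *: p) -> p * p = p ->
  forall m u, size u = (2 * m)%N -> vvalid n u -> inKp p (p * vw v u * p).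
Proof.
move=> H q0 qq Hp Hpr pp; elim=> [|m IHm] u hs hv.
  by move/size0nil: hs => ->; rewrite vw_nil mulr1 pp; exists 1; rewrite scale1r.
have hs2 : size u = (2 * m).+2 by rewrite hs; clear; lia.
case: (boolP (uniq u)) => hu.
  case: u hs hs2 hv hu => [|x [|y r]] //= _ hs2 hv hu.
  have hxy : x != y by move: hu; rewrite inE negb_or => /andP [/andP [] ].
  case: (ltngtP x y) => h.
  - apply: (g_gap H q0 qq Hp Hpr IHm (d := (y - x).-1) (a := x) (b := y)) => //.
    + by rewrite !inE eqxx.
    + by rewrite !inE eqxx orbT.
    + by clear -h; lia.
  - apply: (g_gap H q0 qq Hp Hpr IHm (d := (x - y).-1) (a := y) (b := x)) => //.
    + by rewrite !inE eqxx orbT.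
    + by rewrite !inE eqxx.
    + by clear -h; lia.
  - by rewrite h eqxx in hxy.
case: (nonuniq_split hu) => X [a [Y [Z e]]]; rewrite e in hs2 hv *.
have ha : (1 <= a <= n)%N by apply: (allP hv); rewrite !(mem_cat, inE, eqxx, orbT).
have h := bubble H IHm hs2 hv.
apply: (inKp_tr h).
rewrite catA vw_cat !vw_cons (mulrA (v a)) (rel_vsq H ha) mul1r -vw_cat -catA.
apply: IHm; first by clear -hs2; move: hs2; rewrite !size_cat /= size_cat /=; lia.
by apply: (vv_sub _ hv); subtac.
Qed.


Lemma main_part (K : numFieldType) (A : algType K) n (t v : nat -> A) q :
  q != 0 -> (forall j : nat, (2 <= j <= n)%N -> q ^+ (2 * j) != 1) ->
  hc_relations n t v q ->
  forall p : A, in_Hn n t v p -> p * p = p ->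
     (forall j : nat, (1 <= j < n)%N -> t j * p = q *: p) ->
     minimal_in_Gn0 n t v p.
Proof.
move=> q0 Hq H p hin pp Hp.
have Hpr := p_right H q0 Hq hin Hp.
have qq : (2 <= n)%N -> q + q^-1 != 0.
  move=> n2; have := Hq 2%N; rewrite n2 => /(_ isT); apply: contra => /eqP e.
  have e2 : q * q = -1.
    have : q * (q + q^-1) = 0 by rewrite e mulr0.
    by rewrite mulrDr mulfV // => /eqP; rewrite addr_eq0 => /eqP.
  by rewrite exprM (expr2 q) e2 sqrrN expr1n.
move=> y; split.
  case=> x [[s [hs ->]] ->]; elim: s hs => [|[c w] s IHs] /=.
    by move=> _; rewrite big_nil mulr0 mul0r; apply: inKp0.
  case/andP => hw hs; rewrite big_cons mulrDr mulrDl; apply: inKpD; last exact: IHs.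
  rewrite -scalerAr -scalerAl; apply: inKpZ.
  case/andP: hw => hw hev.
  rewrite /= -mulrA.
  have [s' [hs' ->]] := SpanV_word H Hp hw.
  rewrite mulr_sumr.
  elim: s' hs' => [|[c' u] s' IHs'] /=; first by move=> _; rewrite big_nil; apply: inKp0.
  case/andP => /andP [/eqP hu hvu] hs'; rewrite !big_cons; apply: inKpD; last exact: IHs'.
  rewrite -scalerAr; apply: inKpZ; rewrite mulrA.
  apply: (g_main H q0 qq Hp Hpr pp (m := (count hc_isV w)./2)) => //.
  by rewrite hu mul2n -[LHS](odd_double_half (count hc_isV w)) (negPf hev).
case=> c ->; exists (c *: 1); split.
  exists [:: (c, [::])]; split => //.
  by rewrite big_cons big_nil addr0 /hc_eval big_nil.
by rewrite -scalerAr mulr1 -scalerAl pp.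
Qed.


Unset Implicit Arguments.

Theorem lemma2p17 (R : realType) (A : algType R[i]) (n : nat)
    (t v : nat -> A) (q : R[i]) :
  q != 0 ->
  (forall j : nat, (2 <= j <= n)%N -> q ^+ (2 * j) != 1) ->
  hc_relations n t v q ->
  (forall p : A, in_Hn n t v p -> p * p = p ->
     (forall j : nat, (1 <= j < n)%N -> t j * p = q *: p) ->
     minimal_in_Gn0 n t v p) /\
  (forall p : A, in_Hn n t v p -> p * p = p ->
     (forall j : nat, (1 <= j < n)%N -> t j * p = (- q^-1) *: p) ->
     minimal_in_Gn0 n t v p).
Proof.
move=> q0 Hq H; split; first exact: main_part.
apply: main_part.
- by rewrite oppr_eq0 invr_eq0.
- move=> j hj; rewrite exprM sqrrN -exprM exprVn invr_eq1; exact: Hq.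
- have E : - q^-1 - (- q^-1)^-1 = q - q^-1.
    by rewrite invrN invrK opprK addrC.
  by rewrite /hc_relations E.
Qed.
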